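(* Let $(X,d)$ be a pointed metric space, let $((x_i,y_i))_{i\in I}$ be a Lipschitz interpolating family in $\widetilde X$ for $\mathrm{Lip}_0(X)$ with Lipschitz interpolation constant $M$, and let $(f_i)_{i\in I}$ be a Beurling set of functions in $\mathrm{Lip}_0(X)$ for $((x_i,y_i))_{i\in I}$. Then the bounded linear operator $R:\ell_\infty(I)\to\mathrm{Lip}_0(X)$, $R(\alpha)=\sum_{i\in I}\alpha_i f_i$ for $\alpha=(\alpha_i)_{i\in I}\in\ell_\infty(I)$, is weak*-to-weak* continuous, where $\ell_\infty(I)=\ell_1(I)^*$ and $\mathrm{Lip}_0(X)=\mathcal F(X)^*$.
   Context: All spaces are real. $(X,d)$ is a metric space with base point $0$, $\widetilde{X}=\{(x,y)\in X\times X: x\neq y\}$. $\mathrm{Lip}_0(X)$ is the Banach space of Lipschitz $f:X\to\mathbb{R}$ with $f(0)=0$, normed by $\|f\|=\sup_{(x,y)\in\widetilde X}|f(x)-f(y)|/d(x,y)$. For $x\in X$, $\delta_x\in\mathrm{Lip}_0(X)^*$ is $\delta_x(f)=f(x)$; the Lipschitz-free space $\mathcal F(X)$ is the closed linear span of $\{\delta_x\}$ in $\mathrm{Lip}_0(X)^*$, and $\mathrm{Lip}_0(X)$ is identified isometrically with $\mathcal F(X)^*$ via $f\mapsto(\gamma\mapsto\gamma(f))$; the weak* topology on $\mathrm{Lip}_0(X)$ is the one induced by this duality. For a family $((x_i,y_i))_{i\in I}$ in $\widetilde X$, its Lipschitz interpolating operator is $T:\mathrm{Lip}_0(X)\to\ell_\infty(I)$,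 $T(f)=\big((f(x_i)-f(y_i))/d(x_i,y_i)\big)_{i\in I}$; the family is Lipschitz interpolating for $\mathrm{Lip}_0(X)$ if $T$ is surjective, and then its Lipschitz interpolation constant is $M=\inf\{K\geq 1: \forall \alpha\in\ell_\infty(I), \|\alpha\|_\infty\le1,\ \exists f\in\mathrm{Lip}_0(X),\ \|f\|\le K,\ T(f)=\alpha\}$. A Beurling set of functions in $\mathrm{Lip}_0(X)$ for such a family is a family $(f_i)_{i\in I}$ of functions $f_i:X\to\mathbb R$ with $f_i(0)=0$, $(f_i(x_j)-f_i(y_j))/d(x_j,y_j)=\delta_{ij}$ for all $i,j\in I$, and $\sup_{(x,y)\in\widetilde X}\sum_{i\in I}|f_i(x)-f_i(y)|/d(x,y)\leq M$. (For such a set, $R$ above is a well-defined bounded linear operator into $\mathrm{Lip}_0(X)$.) *)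

(* Defs.v *)
From mathcomp Require Import all_boot all_order all_algebra.
From mathcomp Require Import all_classical all_reals all_analysis.
Set Implicit Arguments. Unset Strict Implicit. Unset Printing Implicit Defensive.
Import Order.TTheory GRing.Theory Num.Theory.
Local Open Scope classical_set_scope.
Local Open Scope ring_scope.

Section Defs.
Variable R : realType.

Definition is_metric (X : Type) (d : X -> X -> R) : Prop :=
  (forall x y, 0 <= d x y) /\ (forall x y, d x y = 0 <-> x = y) /\
  (forall x y, d x y = d y x) /\ (forall x y z, d x z <= d x y + d y z).

Definition Lip0 (X : Type) (d : X -> X -> R) (x0 : X) (f : X -> R) : Prop :=
  f x0 = 0 /\ exists L : R, forall x y, `|f x - f y| <= L * d x y.

Definition lipnorm (X : Type) (d : X -> X -> R) (f : X -> R) : R :=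
  sup [set r | exists x y, x <> y /\ r = `|f x - f y| / d x y].

Definition sumI (I : choiceType) (a : I -> R) : R :=
  fine (\esum_(i in [set: I]) (Num.max (a i) 0)%:E)
  - fine (\esum_(i in [set: I]) (Num.max (- a i) 0)%:E).

Definition linfty (I : choiceType) (a : I -> R) : Prop :=
  exists C : R, forall i, `|a i| <= C.

Definition lone (I : choiceType) (b : I -> R) : Prop :=
  (\esum_(i in [set: I]) (`|b i|)%:E < +oo)%E.

(* The Lipschitz-free space F(X): the norm closure in Lip_0(X)^* of the linear
   span of the evaluations delta_x; elements are represented by their action on
   Lip_0(X). *)
Definition freespace (X : Type) (d : X -> X -> R) (x0 : X)
  (g : (X -> R) -> R) : Prop :=
  forall e : R, 0 < e -> exists (n : nat) (a : nat -> R) (p : nat -> X),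
    forall f, Lip0 d x0 f ->
      `|g f - \sum_(k < n) a k * f (p k)| <= e * lipnorm d f.

Definition wopen (V : Type) (G : set (V -> R)) (U : set V) : Prop :=
  forall v, U v -> exists (n : nat) (phi : nat -> V -> R) (e : R),
    0 < e /\ (forall k, (k < n)%N -> G (phi k)) /\
    [set w | forall k, (k < n)%N -> `|phi k w - phi k v| < e] `<=` U.

(* continuity of T restricted to the domain D (subspace topology on D) *)
Definition wcont_on (V W : Type) (GV : set (V -> R)) (GW : set (W -> R))
  (D : set V) (T : V -> W) : Prop :=
  forall U, wopen GW U -> exists U', wopen GV U' /\
    U' `&` D = (T @^-1` U) `&` D.

(* weak* topology of l_inf(I) = l_1(I)^* *)
Definition linfty_wstar (I : choiceType) : set ((I -> R) -> R) :=
  [set phi | exists b, lone b /\ phi = fun a => sumI (fun i => a i * b i)].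

(* weak* topology of Lip_0(X) = F(X)^* *)
Definition lip_wstar (X : Type) (d : X -> X -> R) (x0 : X) : set ((X -> R) -> R) :=
  freespace d x0.

Definition lip_interpolating (X : Type) (d : X -> X -> R) (x0 : X)
  (I : choiceType) (x y : I -> X) : Prop :=
  (forall i, x i <> y i) /\
  forall a : I -> R, linfty a -> exists f, Lip0 d x0 f /\
    forall i, (f (x i) - f (y i)) / d (x i) (y i) = a i.

Definition interp_const (X : Type) (d : X -> X -> R) (x0 : X)
  (I : choiceType) (x y : I -> X) : R :=
  inf [set K | 1 <= K /\ forall a : I -> R, (forall i, `|a i| <= 1) ->
     exists f, Lip0 d x0 f /\ lipnorm d f <= K /\
       forall i, (f (x i) - f (y i)) / d (x i) (y i) = a i].

Definition beurling (X : Type) (d : X -> X -> R) (x0 : X)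
  (I : choiceType) (x y : I -> X) (M : R) (f : I -> X -> R) : Prop :=
  (forall i, f i x0 = 0) /\
  (forall i j, (f i (x j) - f i (y j)) / d (x j) (y j) = (i == j)%:R) /\
  (forall a b, a <> b ->
     (\esum_(i in [set: I]) (`|f i a - f i b| / d a b)%:E <= M%:E)%E).

Definition Rop (X : Type) (I : choiceType) (f : I -> X -> R) (a : I -> R) : X -> R :=
  fun z => sumI (fun i => a i * f i z).

End Defs.

(* Main.v *)
Require Import Defs.
From mathcomp Require Import all_boot all_order all_algebra.
From mathcomp Require Import all_classical all_reals all_analysis.
From mathcomp Require Import finmap.
From mathcomp Require Import ring lra.
Import Order.TTheory GRing.Theory Num.Theory.
Set Implicit Arguments. Unset Strict Implicit. Unset Printing Implicit Defensive.
Local Open Scope classical_set_scope.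
Local Open Scope ring_scope.

Section Sums.
Variables (R : realType) (I : choiceType).
Implicit Types (u v : I -> R) (F : {fset I}).

Definition HasSum u (s : R) := forall e : R, 0 < e -> exists F0 : {fset I},
  forall F : {fset I}, (F0 `<=` F)%fset -> `|s - \sum_(i <- F) u i| <= e.

Definition Sm u := exists C : R, forall F : {fset I}, \sum_(i <- F) `|u i| <= C.

Lemma esum_fin_ge {v} F : (forall i, 0 <= v i) ->
  ((\sum_(i <- F) v i)%:E <= \esum_(i in [set: I]) (v i)%:E)%E.
Proof.
move=> v0; apply: esum_ge; exists [set` F]; first by split => //; exact: finite_fset.
by rewrite -fsbig_seq ?fset_uniq // sumEFin.
Qed.

Lemma esum_le_ub {v} {C} : (forall i, 0 <= v i) ->
  (forall F, \sum_(i <- F) v i <= C) ->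
  (\esum_(i in [set: I]) (v i)%:E <= C%:E)%E.
Proof.
move=> v0 HC; apply: ge_ereal_sup => _ [A [finA _] <-].
by rewrite fsbig_finite //= sumEFin lee_fin.
Qed.

Lemma sum_mono {v} {F0} {F} : (forall i, 0 <= v i) -> (F0 `<=` F)%fset ->
  \sum_(i <- F0) v i <= \sum_(i <- F) v i.
Proof.
move=> v0 sub; rewrite (big_fsetID _ (mem F0) F) /=.
have -> : [fset x in F | x \in F0]%fset = F0.
  apply/fsetP => x; rewrite !inE /= andbC; case xF0: (x \in F0) => //=.
  by rewrite (fsubsetP sub).
by rewrite lerDl sumr_ge0.
Qed.

Lemma nonneg_hassum v : (forall i, 0 <= v i) -> Sm v ->
  HasSum v (fine (\esum_(i in [set: I]) (v i)%:E)).
Proof.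
move=> v0 [C HC].
have HC' : forall F, \sum_(i <- F) v i <= C.
  by move=> F; apply: le_trans (HC F); apply: ler_sum => i _; rewrite ler_norm.
have ub := esum_le_ub v0 HC'.
have lb : (0 <= \esum_(i in [set: I]) (v i)%:E)%E by apply: esum_ge0 => i _; rewrite lee_fin.
move: ub lb; case E: (\esum_(i in [set: I]) (v i)%:E) => [S| |] //= _ S0.
move=> e e0.
have : ((S - e)%:E < \esum_(i in [set: I]) (v i)%:E)%E by rewrite E lte_fin ltrBlDr ltrDl.
rewrite /esum => /ereal_sup_gt [_ [A [finA _] <-]].
rewrite fsbig_finite //= sumEFin lte_fin => HA.
exists (fset_set A) => F sub.
have h1 : \sum_(i <- F) v i <= S.
  by rewrite -lee_fin -E; apply: esum_fin_ge.
have h2 := sum_mono v0 sub.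
rewrite ger0_norm ?subr_ge0 //.
rewrite lerBlDr -lerBlDl; apply/ltW/(lt_le_trans HA) => //.
Qed.


Lemma hassum_ext u v s : (forall i, u i = v i) -> HasSum u s -> HasSum v s.
Proof.
move=> uv H e e0; have [F0 HF0] := H e e0; exists F0 => F sub.
by rewrite -(eq_bigr _ (fun i _ => uv i)); apply: HF0.
Qed.

Lemma hassum0 : HasSum (fun _ => 0) 0.
Proof. by move=> e e0; exists fset0%fset => F _; rewrite big1 // subr0 normr0 ltW. Qed.

Lemma hassumD u v s t : HasSum u s -> HasSum v t ->
  HasSum (fun i => u i + v i) (s + t).
Proof.
move=> Hu Hv e e0.
have e20 : 0 < e / 2 by rewrite divr_gt0.
have [F1 H1] := Hu _ e20; have [F2 H2] := Hv _ e20.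
exists (F1 `|` F2)%fset => F sub.
have s1 : (F1 `<=` F)%fset by apply: fsubset_trans sub; apply: fsubsetUl.
have s2 : (F2 `<=` F)%fset by apply: fsubset_trans sub; apply: fsubsetUr.
rewrite big_split /= opprD addrACA.
apply: le_trans (ler_normD _ _) _.
by rewrite [e](splitr e) lerD // ?H1 ?H2.
Qed.

Lemma hassumZ c u s : HasSum u s -> HasSum (fun i => c * u i) (c * s).
Proof.
move=> Hu e e0.
have e1 : 0 < e / (`|c| + 1) by rewrite divr_gt0 // ltr_wpDl.
have [F0 H0] := Hu _ e1; exists F0 => F sub.
rewrite -mulr_sumr -mulrBr normrM.
apply: le_trans (ler_wpM2l (normr_ge0 c) (H0 F sub)) _.
have hc : 0 < `|c| + 1 by rewrite ltr_wpDl.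
by rewrite mulrA ler_pdivrMr // mulrDr mulr1 mulrC lerDl ltW.
Qed.


Lemma hassumB u v s t : HasSum u s -> HasSum v t ->
  HasSum (fun i => u i - v i) (s - t).
Proof.
move=> Hu Hv; have := hassumD Hu (hassumZ (-1) Hv).
rewrite mulN1r; apply: hassum_ext => i; by rewrite mulN1r.
Qed.

Lemma hassum_big (U : nat -> I -> R) (S : nat -> R) n :
  (forall k, HasSum (U k) (S k)) ->
  HasSum (fun i => \sum_(k < n) U k i) (\sum_(k < n) S k).
Proof.
move=> H; elim: n => [|n IH].
  rewrite big_ord0; apply: (hassum_ext _ hassum0) => i; by rewrite big_ord0.
rewrite big_ord_recr /=; apply: (hassum_ext _ (hassumD IH (H n))) => i.
by rewrite big_ord_recr.
Qed.

Lemma hassum_bound u s C : HasSum u s ->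
  (forall F, `|\sum_(i <- F) u i| <= C) -> `|s| <= C.
Proof.
move=> Hu HC; apply/ler_addgt0Pr => e e0.
have [F0 H0] := Hu e e0.
have -> : s = (s - \sum_(i <- F0) u i) + \sum_(i <- F0) u i by rewrite subrK.
apply: le_trans (ler_normD _ _) _; rewrite addrC lerD //; exact: H0.
Qed.

Lemma hassum_unique u s t : HasSum u s -> HasSum u t -> s = t.
Proof.
move=> Hs Ht; have := hassumB Hs Ht.
have -> : (fun i => u i - u i) = (fun _ => 0) by apply: funext => i; rewrite subrr.
move=> H0; apply/eqP; rewrite -subr_eq0 -normr_le0.
apply: (hassum_bound H0) => F; by rewrite big1 // normr0.
Qed.

Lemma max0_norm (a : R) : `|Num.max a 0| <= `|a|.
Proof.
by have [h|h] := lerP 0 a; rewrite ?normr0.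
Qed.

Lemma max0_split (a : R) : Num.max a 0 - Num.max (- a) 0 = a.
Proof.
by have [h|h] := lerP 0 a; have [h'|h'] := lerP 0 (- a); lra.
Qed.

Lemma sumI_hassum u : Sm u -> HasSum u (sumI u).
Proof.
move=> [C HC].
have Sp : Sm (fun i => Num.max (u i) 0).
  exists C => F; apply: le_trans (HC F); apply: ler_sum => i _; exact: max0_norm.
have Sn : Sm (fun i => Num.max (- u i) 0).
  exists C => F; apply: le_trans (HC F); apply: ler_sum => i _.
  by apply: le_trans (max0_norm _) _; rewrite normrN.
have p0 : forall b : R, 0 <= Num.max b 0 by move=> b; have [h|h] := lerP 0 b; lra.
have := hassumB (nonneg_hassum (fun i => p0 (u i)) Sp)
                (nonneg_hassum (fun i => p0 (- u i)) Sn).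
by apply: hassum_ext => i; rewrite max0_split.
Qed.

Lemma sumI_eq u s : Sm u -> HasSum u s -> sumI u = s.
Proof. by move=> Su Hs; apply: hassum_unique (sumI_hassum Su) Hs. Qed.

End Sums.

Lemma small0 (R : realType) (x Q : R) : 0 <= Q ->
  (forall t, 0 < t -> `|x| <= t * Q) -> x = 0.
Proof.
move=> Q0 H; apply/eqP; rewrite -normr_le0; apply/ler_addgt0Pr => e e0.
rewrite add0r.
have hQ : 0 < Q + 1 by rewrite ltr_wpDl.
apply: le_trans (H (e / (Q + 1)) _) _; first by rewrite divr_gt0.
rewrite mulrAC ler_pdivrMr // mulrDr mulr1 lerDl; exact: ltW.
Qed.

Lemma metric_pos (R : realType) (X : Type) (d : X -> X -> R) z w :
  is_metric d -> z <> w -> 0 < d z w.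
Proof.
move=> [d0 [dE _]] zw; rewrite lt_def d0 andbT; apply/eqP => /dE; exact: zw.
Qed.

Lemma metric_refl (R : realType) (X : Type) (d : X -> X -> R) z :
  is_metric d -> d z z = 0.
Proof. by move=> [_ [dE _]]; apply/dE. Qed.

Lemma lipnorm_le (R : realType) (X : Type) (d : X -> X -> R) h L :
  is_metric d -> 0 <= L -> (forall z w, `|h z - h w| <= L * d z w) ->
  lipnorm d h <= L.
Proof.
move=> hd L0 H; rewrite /lipnorm.
case: (pselect ([set r | exists x y, x <> y /\ r = `|h x - h y| / d x y] !=set0)%classic) => ne.
  apply: ge_sup => // _ [z [w [zw ->]]].
  by rewrite ler_pdivrMr ?metric_pos.
have -> : [set r | exists x y, x <> y /\ r = `|h x - h y| / d x y] = set0.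
  by apply/seteqP; split => // r Hr; apply: ne; exists r.
by rewrite sup0.
Qed.

Lemma sum_absM (R : realType) (I : choiceType) (F : {fset I}) (b u : I -> R) C :
  (forall i, `|b i| <= C) ->
  \sum_(i <- F) `|b i * u i| <= C * \sum_(i <- F) `|u i|.
Proof.
move=> Hb; rewrite mulr_sumr; apply: ler_sum => i _; rewrite normrM.
by apply: ler_wpM2r => //; rewrite normr_ge0.
Qed.

Lemma rop_hassum (R : realType) (X : Type) (d : X -> X -> R) (x0 : X)
  (I : choiceType) (f : I -> X -> R) (K : R) (be : I -> R) (C : R) z :
  (forall i, f i x0 = 0) ->
  (forall (F : {fset I}) z w, \sum_(i <- F) `|f i z - f i w| <= K * d z w) ->
  0 <= C -> (forall i, `|be i| <= C) ->
  HasSum (fun i => be i * f i z) (Rop f be z).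
Proof.
move=> f0 HF C0 Hb; apply: sumI_hassum.
exists (C * (K * d z x0)) => F.
apply: le_trans (sum_absM F (fun i => f i z) Hb) _.
apply: ler_wpM2l => //; apply: le_trans (HF F z x0).
by apply: ler_sum => i _; rewrite f0 subr0.
Qed.

Lemma rop_lip (R : realType) (X : Type) (d : X -> X -> R) (x0 : X)
  (I : choiceType) (f : I -> X -> R) (K : R) (be : I -> R) (C : R) :
  (forall i, f i x0 = 0) ->
  (forall (F : {fset I}) z w, \sum_(i <- F) `|f i z - f i w| <= K * d z w) ->
  0 <= C -> (forall i, `|be i| <= C) ->
  (forall z w, `|Rop f be z - Rop f be w| <= (C * K) * d z w) /\ Rop f be x0 = 0.
Proof.
move=> f0 HF C0 Hb; split.
  move=> z w.
  have H := hassumB (rop_hassum z f0 HF C0 Hb) (rop_hassum w f0 HF C0 Hb).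
  apply: (hassum_bound H) => F.
  rewrite (eq_bigr (fun i => be i * (f i z - f i w))) => [|i _]; last by rewrite mulrBr.
  apply: le_trans (ler_norm_sum _ _ _) _.
  apply: le_trans (sum_absM F _ Hb) _.
  rewrite -mulrA; apply: ler_wpM2l => //; exact: HF.
apply/eqP; rewrite -normr_le0; apply: (hassum_bound (rop_hassum x0 f0 HF C0 Hb)) => F.
by rewrite big1 ?normr0 // => i _; rewrite f0 mulr0.
Qed.

Lemma approx (R : realType) (X : Type) (d : X -> X -> R) (x0 : X) g e :
  is_metric d -> freespace d x0 g -> 0 < e ->
  exists n (a : nat -> R) (p : nat -> X), forall h L, h x0 = 0 -> 0 <= L ->
    (forall z w, `|h z - h w| <= L * d z w) ->
    `|g h - \sum_(k < n) a k * h (p k)| <= e * L.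
Proof.
move=> hd Hg e0; have [n [a [p H]]] := Hg e e0; exists n, a, p => h L h0 L0 HL.
apply: le_trans (H h _) _; first by split => //; exists L.
by apply: ler_wpM2l; [exact: ltW | exact: lipnorm_le].
Qed.

Lemma exch (R : realType) (X : Type) (I : choiceType) (F : {fset I}) n
  (a : nat -> R) (p : nat -> X) (s : I -> R) (f : I -> X -> R) :
  \sum_(k < n) a k * (\sum_(i <- F) s i * f i (p k)) =
  \sum_(i <- F) s i * (\sum_(k < n) a k * f i (p k)).
Proof.
under eq_bigr do rewrite mulr_sumr.
rewrite exchange_big /=; apply: eq_bigr => i _; rewrite mulr_sumr.
by apply: eq_bigr => k _; rewrite mulrCA.
Qed.

Lemma fi_lip (R : realType) (X : Type) (d : X -> X -> R) (I : choiceType)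
  (f : I -> X -> R) (K : R) i :
  (forall (F : {fset I}) z w, \sum_(i <- F) `|f i z - f i w| <= K * d z w) ->
  forall z w, `|f i z - f i w| <= K * d z w.
Proof. by move=> HF z w; have := HF [fset i]%fset z w; rewrite big_seq_fset1. Qed.

Lemma lin_h (R : realType) (X : Type) (d : X -> X -> R) (x0 : X)
  (I : choiceType) (f : I -> X -> R) (K : R) g (F : {fset I}) (s : I -> R) :
  is_metric d -> 0 <= K -> (forall i, f i x0 = 0) ->
  (forall (F : {fset I}) z w, \sum_(i <- F) `|f i z - f i w| <= K * d z w) ->
  freespace d x0 g -> (forall i, `|s i| <= 1) ->
  g (fun z => \sum_(i <- F) s i * f i z) = \sum_(i <- F) s i * g (f i).
Proof.
move=> hd K0 f0 HF Hg Hs.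
apply/eqP; rewrite -subr_eq0; apply/eqP.
apply: (@small0 _ _ (K + \sum_(i <- F) K)); first by rewrite addr_ge0 // sumr_ge0.
move=> t t0; have [n [a [p H]]] := approx hd Hg t0.
set h := fun z => _.
have hlip : forall z w, `|h z - h w| <= K * d z w.
  move=> z w; rewrite /h -sumrB.
  rewrite (eq_bigr (fun i => s i * (f i z - f i w))) => [|i _]; last by rewrite mulrBr.
  apply: le_trans (ler_norm_sum _ _ _) _.
  apply: le_trans (sum_absM F _ Hs) _; rewrite mul1r; exact: HF.
have h0 : h x0 = 0 by rewrite /h big1 // => i _; rewrite f0 mulr0.
have H1 := H h K h0 K0 hlip.
have E : \sum_(k < n) a k * h (p k) = \sum_(i <- F) s i * (\sum_(k < n) a k * f i (p k)).
  exact: (exch F n a p s f).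
rewrite E in H1.
have H2 : `|\sum_(i <- F) s i * (\sum_(k < n) a k * f i (p k)) - \sum_(i <- F) s i * g (f i)|
    <= t * \sum_(i <- F) K.
  rewrite -sumrB; apply: le_trans (ler_norm_sum _ _ _) _.
  rewrite mulr_sumr; apply: ler_sum => i _; rewrite -mulrBr normrM.
  rewrite -[t * K]mul1r; apply: ler_pM => //; rewrite ?normr_ge0 //.
  rewrite distrC; apply: (H (f i) K (f0 i) K0); exact: fi_lip.
have -> : g h - \sum_(i <- F) s i * g (f i) =
   (g h - \sum_(i <- F) s i * (\sum_(k < n) a k * f i (p k))) +
   (\sum_(i <- F) s i * (\sum_(k < n) a k * f i (p k)) - \sum_(i <- F) s i * g (f i)).
  by rewrite addrA subrK.
apply: le_trans (ler_normD _ _) _; rewrite mulrDr; exact: lerD.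
Qed.

Lemma cb2 (R : realType) (X : Type) (d : X -> X -> R) (x0 : X)
  (I : choiceType) (f : I -> X -> R) (K : R) g e n (a : nat -> R) (p : nat -> X) :
  is_metric d -> 0 <= K -> (forall i, f i x0 = 0) ->
  (forall (F : {fset I}) z w, \sum_(i <- F) `|f i z - f i w| <= K * d z w) ->
  freespace d x0 g ->
  (forall h L, h x0 = 0 -> 0 <= L ->
    (forall z w, `|h z - h w| <= L * d z w) ->
    `|g h - \sum_(k < n) a k * h (p k)| <= e * L) ->
  forall F : {fset I},
  \sum_(i <- F) `|\sum_(k < n) a k * f i (p k) - g (f i)| <= e * K.
Proof.
move=> hd K0 f0 HF Hg H F.
set c := fun i => \sum_(k < n) a k * f i (p k).
set s := fun i => if 0 <= c i - g (f i) then 1 else -1 : R.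
have Hs : forall i, `|s i| <= 1.
  by move=> i; rewrite /s; case: ifP => _; rewrite ?normrN normr1.
have E : \sum_(i <- F) `|c i - g (f i)| =
   \sum_(i <- F) s i * c i - \sum_(i <- F) s i * g (f i).
  rewrite -sumrB; apply: eq_bigr => i _; rewrite -mulrBr /s.
  case: ifP => h; first by rewrite mul1r ger0_norm.
  by rewrite mulN1r ltr0_norm // ltNge h.
have hlin := @lin_h _ _ d x0 _ f K g F s hd K0 f0 HF Hg Hs.
rewrite E -hlin.
pose h := fun z => \sum_(i <- F) s i * f i z.
have hlip : forall z w, `|h z - h w| <= K * d z w.
  move=> z w; rewrite /h -sumrB.
  rewrite (eq_bigr (fun i => s i * (f i z - f i w))) => [|i _]; last by rewrite mulrBr.
  apply: le_trans (ler_norm_sum _ _ _) _.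
  apply: le_trans (sum_absM F _ Hs) _; rewrite mul1r; exact: HF.
have h0 : h x0 = 0 by rewrite /h big1 // => i _; rewrite f0 mulr0.
have H1 := H h K h0 K0 hlip.
have Ex : \sum_(k < n) a k * h (p k) = \sum_(i <- F) s i * c i.
  exact: (exch F n a p s f).
rewrite Ex distrC in H1.
exact: le_trans (ler_norm _) H1.
Qed.

Lemma rep (R : realType) (X : Type) (d : X -> X -> R) (x0 : X)
  (I : choiceType) (f : I -> X -> R) (K : R) g :
  is_metric d -> 0 <= K -> (forall i, f i x0 = 0) ->
  (forall (F : {fset I}) z w, \sum_(i <- F) `|f i z - f i w| <= K * d z w) ->
  freespace d x0 g ->
  exists b : I -> R, lone b /\
    forall be, linfty be -> g (Rop f be) = sumI (fun i => be i * b i).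
Proof.
move=> hd K0 f0 HF Hg.
pose b := fun i => g (f i).
exists b.
have [n1 [a1 [p1 H1]]] := approx hd Hg (@ltr01 R).
pose Cb := K + \sum_(k < n1) `|a1 k| * (K * d (p1 k) x0).
have Sb : forall F : {fset I}, \sum_(i <- F) `|b i| <= Cb.
  move=> F.
  have C1 := cb2 hd K0 f0 HF Hg H1 F.
  apply: le_trans (_ : \sum_(i <- F) (`|\sum_(k < n1) a1 k * f i (p1 k) - b i|
      + `|\sum_(k < n1) a1 k * f i (p1 k)|) <= Cb).
    apply: ler_sum => i _.
    have E : b i = - (\sum_(k < n1) a1 k * f i (p1 k) - b i) + \sum_(k < n1) a1 k * f i (p1 k).
      by rewrite opprB subrK.
    by rewrite {1}E; apply: le_trans (ler_normD _ _) _; rewrite normrN.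
  rewrite big_split /= /Cb; apply: lerD; first by rewrite mul1r in C1.
  apply: le_trans (_ : \sum_(i <- F) \sum_(k < n1) `|a1 k| * `|f i (p1 k)| <= _).
    apply: ler_sum => i _; apply: le_trans (ler_norm_sum _ _ _) _.
    by apply: ler_sum => k _; rewrite normrM.
  rewrite exchange_big /=; apply: ler_sum => k _; rewrite -mulr_sumr.
  apply: ler_wpM2l; first exact: normr_ge0.
  apply: le_trans (HF F (p1 k) x0); apply: ler_sum => i _; by rewrite f0 subr0.
split.
  rewrite /lone; apply: le_lt_trans (esum_le_ub (v := fun i => `|b i|) (fun i => normr_ge0 _) Sb) (ltry _).
move=> be [C1 HC1]; pose C := `|C1|.
have HC : forall i, `|be i| <= C by move=> i; apply: le_trans (HC1 i) (ler_norm _).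
have C0 : 0 <= C by exact: normr_ge0.
have Sbe : Sm (fun i => be i * b i).
  exists (C * Cb) => F; apply: le_trans (sum_absM F _ HC) _.
  by apply: ler_wpM2l.
have Hs := sumI_hassum Sbe.
have [Lip Rx0] := rop_lip f0 HF C0 HC.
apply/eqP; rewrite -subr_eq0; apply/eqP.
apply: (@small0 _ _ (C * K + C * K)); first by rewrite addr_ge0 // mulr_ge0.
move=> t t0; have [n [a [p H]]] := approx hd Hg t0.
have Ha := H (Rop f be) (C * K) Rx0 (mulr_ge0 C0 K0) Lip.
have Hsum : HasSum (fun i => \sum_(k < n) a k * (be i * f i (p k)))
    (\sum_(k < n) a k * Rop f be (p k)).
  apply: (@hassum_big _ _ (fun k i => a k * (be i * f i (p k))) (fun k => a k * Rop f be (p k)) n) => k; apply: hassumZ; exact: (rop_hassum (p k) f0 HF C0 HC).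
have Hd := hassumB Hsum Hs.
have Hb2 : `|\sum_(k < n) a k * Rop f be (p k) - sumI (fun i => be i * b i)| <= C * (t * K).
  apply: (hassum_bound Hd) => F.
  rewrite (eq_bigr (fun i => be i * (\sum_(k < n) a k * f i (p k) - b i))); last first.
    move=> i _; rewrite mulrBr; congr (_ - _); rewrite mulr_sumr.
    by apply: eq_bigr => k _; rewrite mulrCA.
  apply: le_trans (ler_norm_sum _ _ _) _.
  apply: le_trans (sum_absM F _ HC) _.
  apply: ler_wpM2l => //; exact: (cb2 hd K0 f0 HF Hg H F).
have -> : g (Rop f be) - sumI (fun i => be i * b i) =
   (g (Rop f be) - \sum_(k < n) a k * Rop f be (p k)) +
   (\sum_(k < n) a k * Rop f be (p k) - sumI (fun i => be i * b i)).
  by rewrite addrA subrK.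
apply: le_trans (ler_normD _ _) _; rewrite mulrDr; apply: lerD => //.
by rewrite mulrCA.
Qed.

Lemma beur_sum (R : realType) (X : Type) (d : X -> X -> R) (x0 : X)
  (I : choiceType) (x y : I -> X) (M : R) (f : I -> X -> R) :
  is_metric d -> beurling d x0 x y M f ->
  forall (F : {fset I}) z w, \sum_(i <- F) `|f i z - f i w| <= `|M| * d z w.
Proof.
move=> hd [_ [_ Hb]] F z w.
case: (pselect (z = w)) => [<-|zw].
  rewrite metric_refl // mulr0 big1 // => i _; by rewrite subrr normr0.
have dpos := metric_pos hd zw.
have H1 := Hb z w zw.
have H2 := @esum_fin_ge R I (fun i => `|f i z - f i w| / d z w) F
  (fun i => divr_ge0 (normr_ge0 _) (ltW dpos)).
have H3 := le_trans H2 H1; rewrite lee_fin in H3.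
have -> : \sum_(i <- F) `|f i z - f i w| = (\sum_(i <- F) `|f i z - f i w| / d z w) * d z w.
  rewrite mulr_suml; apply: eq_bigr => i _; rewrite divfK //; exact: lt0r_neq0.
apply: ler_wpM2r; first exact: ltW.
exact: le_trans H3 (ler_norm _).
Qed.

Theorem theorem3p11 (R : realType) (X : Type) (d : X -> X -> R) (x0 : X)
  (I : choiceType) (x y : I -> X) (M : R) (f : I -> X -> R) :
  is_metric d ->
  lip_interpolating d x0 x y ->
  M = interp_const d x0 x y ->
  beurling d x0 x y M f ->
  wcont_on (@linfty_wstar R I) (lip_wstar d x0) (@linfty R I) (Rop f).
Proof.
move=> hd _ _ Hb U HU.
have f0 : forall i, f i x0 = 0 by case: Hb.
have HF := beur_sum hd Hb.
have K0 : 0 <= `|M| by exact: normr_ge0.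
pose U' := fun be : I -> R => exists n (psi : nat -> (I -> R) -> R) (e : R),
  0 < e /\ (forall k, (k < n)%N -> linfty_wstar (psi k)) /\
  forall w, linfty w -> (forall k, (k < n)%N -> `|psi k w - psi k be| < e) ->
    U (Rop f w).
exists U'; split.
  move=> v [n [psi [e [e0 [Hpsi HU']]]]].
  exists n, psi, e; split => //; split => // w /= Hw.
  pose m := \big[Num.max/0]_(k < n) `|psi k w - psi k v|.
  have mlt : m < e by apply: bigmax_lt => // k _; exact: Hw k (ltn_ord k).
  exists n, psi, (e - m); split; first by rewrite subr_gt0.
  split => // u Du Hu; apply: HU' Du _ => k kn.
  have mk : `|psi k w - psi k v| <= m.
    exact: (le_bigmax 0 (fun k : 'I_n => `|psi k w - psi k v|) (Ordinal kn)).
  have -> : psi k u - psi k v = (psi k u - psi k w) + (psi k w - psi k v).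
    by rewrite addrA subrK.
  apply: le_lt_trans (ler_normD _ _) _.
  have := Hu k kn; lra.
apply/seteqP; split => be [Hbe Dbe].
  move: Hbe => [n [psi [e [e0 [_ H]]]]]; split => //.
  by apply: H Dbe _ => k _; rewrite subrr normr0.
have [n [phi [e [e0 [Hphi Hsub]]]]] := HU _ Hbe.
have : forall k, exists bk : I -> R, (k < n)%N -> lone bk /\
    forall w, linfty w -> phi k (Rop f w) = sumI (fun i => w i * bk i).
  move=> k; case: (ltnP k n) => kn.
    have [bk [l Hk]] := rep hd K0 f0 HF (Hphi k kn).
    by exists bk.
  by exists (fun _ => 0).
move=> /choice [B HB].
split => //.
exists n, (fun k a => sumI (fun i => a i * B k i)), e; split => //; split.
  move=> k kn; exists (B k); split => //; exact: (HB k kn).1.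
move=> w Dw Hw; apply: Hsub => k kn /=.
rewrite !(HB k kn).2 //; exact: Hw.
Qed.
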